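(* Let $\mathcal{X}$ be a finite set, $\pi$ a probability distribution on $\mathcal{X}$ with $\pi(x)>0$ for all $x$, $p>1$, $\alpha>0$, and $\mathcal{N}$ a symmetric neighborhood mapping on $\mathcal{X}$ (with $x\notin\mathcal{N}(x)$) such that $\max_{x}|\mathcal{N}(x)|\le p^\alpha$. Suppose there exist $x^*\in\mathcal{X}$, an operator $\mathsf{T}\colon\mathcal{X}\to\mathcal{X}$ and a constant $\nu>\alpha$ such that $\mathsf{T}(x^* )=x^*$ and for every $x\neq x^*$, $\mathsf{T}(x)\in\mathcal{N}(x)$ and $\pi(\mathsf{T}(x))\ge p^\nu\pi(x)$ (Assumption 1). Then for any transition matrix $P$ on $\mathcal{X}$ that is irreducible and reversible with respect to $\pi$, $$\mathrm{Gap}(P)\ge\kappa(p,\alpha,\nu)\min_{x\neq x^*}P(x,\mathsf{T}(x)),\qquad \kappa(p,\alpha,\nu)=\tfrac12\{1-p^{-(\nu-\alpha)/2}\}^3,$$ and for any transition rate matrix $Q$ on $\mathcal{X}$ that is irreducible and reversible with respect to $\pi$, $\mathrm{Gap}(Q)\ge\kappa(p,\alpha,\nu)\min_{x\neq x^*}Q(x,\mathsf{T}(x))$.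
   Context: For an irreducible reversible transition matrix $P$ with eigenvalues $1=\lambda_1(P)>\lambda_2(P)\ge\cdots$, $\mathrm{Gap}(P)=1-\lambda_2(P)$. For an irreducible reversible transition rate matrix $Q$ with eigenvalues $0=\lambda_1(Q)>\lambda_2(Q)\ge\cdots$, $\mathrm{Gap}(Q)=-\lambda_2(Q)$. *)

(* Defs.v *)
From HB Require Import structures.
From mathcomp Require Import all_boot all_order all_algebra.
From mathcomp Require Import all_classical all_reals.
From mathcomp Require Import topology normedtype sequences exp.
Set Implicit Arguments. Unset Strict Implicit. Unset Printing Implicit Defensive.
Import Order.TTheory GRing.Theory Num.Theory.
Local Open Scope ring_scope.
Local Open Scope classical_set_scope.

Section Defs.
Variable R : realType.
Variable n : nat.

Definition is_prob (pi : 'I_n -> R) : Prop :=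
  (forall x, 0 < pi x) /\ \sum_(x < n) pi x = 1.

Definition transition_matrix (P : 'M[R]_n) : Prop :=
  (forall x y, 0 <= P x y) /\ (forall x, \sum_(y < n) P x y = 1).

Definition rate_matrix (Q : 'M[R]_n) : Prop :=
  (forall x y, x != y -> 0 <= Q x y) /\ (forall x, \sum_(y < n) Q x y = 0).

Definition offdiag (A : 'M[R]_n) : 'M[R]_n :=
  \matrix_(i, j) (if i == j then 0 else A i j).

Definition irreducible (A : 'M[R]_n) : Prop :=
  forall x y, exists k : nat, 0 < (offdiag A ^+ k) x y.

Definition reversible (pi : 'I_n -> R) (A : 'M[R]_n) : Prop :=
  forall x y, pi x * A x y = pi y * A y x.

(* Second largest eigenvalue (counted with multiplicity) of a matrix whose
   eigenvalues are real, diagonalizable, and bounded above by the top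
   eigenvalue [top]: it equals [top] if the [top]-eigenspace has dimension
   >= 2, and otherwise the largest eigenvalue strictly below [top]. *)
Definition lambda2 (top : R) (A : 'M[R]_n) : R :=
  if (2 <= \rank (eigenspace A top))%N then top
  else sup [set a : R | eigenvalue A a /\ a < top].

Definition GapP (P : 'M[R]_n) : R := 1 - lambda2 1 P.
Definition GapQ (Q : 'M[R]_n) : R := - lambda2 0 Q.

Definition is_min_off (xs : 'I_n) (f : 'I_n -> R) (m : R) : Prop :=
  (exists2 x, x != xs & m = f x) /\ (forall x, x != xs -> m <= f x).

Definition kappa (p alpha nu : R) : R :=
  2^-1 * (1 - p `^ (- ((nu - alpha) / 2))) ^+ 3.

End Defs.

(* Main.v *)
Require Import Defs.
From HB Require Import structures.
From mathcomp Require Import all_boot all_order all_algebra.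
From mathcomp Require Import all_classical all_reals.
From mathcomp Require Import topology normedtype sequences exp.
From mathcomp Require Import ring lra.
Import Order.TTheory GRing.Theory Num.Theory.
Local Open Scope ring_scope.

Section Path.
Variables (R : realType) (n : nat) (pi : 'I_n -> R) (xs : 'I_n) (T : 'I_n -> 'I_n).
Hypothesis Hpi : forall x, 0 < pi x.
Hypothesis HTxs : T xs = xs.
Hypothesis Hinc : forall x, x != xs -> pi x < pi (T x).

Lemma iter_xs k : iter k T xs = xs.
Proof. by elim: k => //= k ->. Qed.

Lemma iter_to_xs_gen c : forall x, (#|[pred y | (pi x < pi y)%R]| <= c)%N -> iter c T x = xs.
Proof.
elim: c => [|c IH] x hc.
  case: (eqVneq x xs) => // nx.
  have : (0 < #|[pred y | (pi x < pi y)%R]|)%N.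
    by apply/card_gt0P; exists (T x); rewrite inE Hinc.
  by rewrite leqNgt in hc; rewrite (negbTE hc).
rewrite iterSr; case: (eqVneq x xs) => [->|nx]; first by rewrite HTxs iter_xs.
have sub : [pred y | (pi (T x) < pi y)%R] \subset [pred y | (pi x < pi y)%R].
  by apply/fintype.subsetP => y; rewrite !inE => /(lt_trans (Hinc _ nx)).
apply: IH; rewrite -ltnS; apply: leq_trans hc; apply: proper_card; apply/properP; split=> //.
by exists (T x); rewrite !inE ?ltxx ?Hinc.
Qed.

Lemma iter_to_xs x : iter n T x = xs.
Proof.
apply: iter_to_xs_gen; apply: leq_trans (max_card _) _; by rewrite card_ord.
Qed.

Lemma telesc (f : 'I_n -> R) x :
  f x - f xs = \sum_(k < n) (f (iter k T x) - f (iter k.+1 T x)).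
Proof.
rewrite -(big_mkord xpredT (fun k => f (iter k T x) - f (iter k.+1 T x))).
have := telescope_sumr (fun k => f (iter k T x)) (leq0n n).
rewrite iter_to_xs /= => h.
rewrite -[LHS]opprB -h -sumrN; apply: eq_bigr => k _; by rewrite opprB.
Qed.

End Path.

Lemma cauchy_w (R : realType) K (w d : 'I_K -> R) : (forall k, 0 < w k) ->
  (\sum_(k < K) d k) ^+ 2 <= (\sum_(k < K) w k) * \sum_(k < K) (d k ^+ 2 / w k).
Proof.
elim: K w d => [|K IH] w d hw; first by rewrite !big_ord0 expr2 !mul0r.
rewrite !big_ord_recr /=.
set A := \sum_(i < K) d _; set W := \sum_(i < K) w _; set S := \sum_(i < K) _.
have hA : A ^+ 2 <= W * S by apply: IH => k; apply: hw.
have hW : 0 <= W by apply: sumr_ge0 => i _; apply/ltW/hw.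
have hS : 0 <= S by apply: sumr_ge0 => i _; apply: divr_ge0; [apply: sqr_ge0|apply/ltW/hw].
set wl := w ord_max; set dl := d ord_max.
have hwl : 0 < wl by apply: hw.
set e := dl / wl.
have -> : dl = e * wl by rewrite /e divfK // gt_eqF.
have -> : (e * wl) ^+ 2 / wl = e ^+ 2 * wl by rewrite exprMn -mulrA; congr (_ * _); rewrite expr2 mulfK // gt_eqF.
suff : 2 * A * e <= W * e ^+ 2 + S.
  move=> h; have := ler_wpM2l (ltW hwl) h; nra.
case: (eqVneq W 0) => [W0|Wn0].
  have hA0 : A = 0.
    apply/eqP; rewrite -sqrf_eq0 eq_le sqr_ge0 andbT. by move: hA; rewrite W0 mul0r.
  by rewrite hA0 W0 !(mul0r, mulr0) add0r.
have Wp : 0 < W by rewrite lt_def Wn0 hW.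
suff : W * (2 * A * e) <= W * (W * e ^+ 2 + S) by rewrite ler_pM2l.
have := sqr_ge0 (W * e - A); nra.
Qed.

Lemma geo_le (R : realType) (t : R) K : 0 <= t < 1 ->
  \sum_(k < K) t ^+ k <= (1 - t)^-1.
Proof.
move=> /andP[t0 t1].
have ht : 0 < 1 - t by rewrite subr_gt0.
have e : (1 - t) * \sum_(k < K) t ^+ k = 1 - t ^+ K.
  by rewrite -opprB mulNr -subrX1 opprB.
rewrite -(ler_pM2l ht) mulfV ?gt_eqF // e lerBlDr lerDl; exact: exprn_ge0.
Qed.
Section Poinc.
Variables (R : realType) (n : nat) (pi : 'I_n -> R) (xs : 'I_n) (T : 'I_n -> 'I_n).
Variables (t A B : R).
Hypothesis Hpi : forall x, 0 < pi x.
Hypothesis HTxs : T xs = xs.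
Hypothesis Hinc : forall x, x != xs -> pi x < pi (T x).
Hypothesis Hcnt : forall z, z != xs -> (#|[pred y | T y == z]|%:R : R) <= A.
Hypothesis HB : 0 < B.
Hypothesis HBpi : forall y, y != xs -> B * pi y <= pi (T y).
Hypothesis Ht : 0 < t < 1.
Hypothesis Ht2 : t ^+ 2 = A / B.

Lemma sum_part (g : 'I_n -> 'I_n) (h : 'I_n -> R) :
  \sum_x pi x * h (g x) = \sum_z h z * \sum_(x | g x == z) pi x.
Proof.
rewrite (partition_big g xpredT) //=; apply: eq_bigr => z _; rewrite mulr_sumr.
by apply: eq_bigr => x /eqP <-; rewrite mulrC.
Qed.

Lemma pre k z : z != xs -> \sum_(x | iter k T x == z) pi x <= (t ^+ 2) ^+ k * pi z.
Proof.
elim: k z => [|k IH] z nz.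
  by rewrite /= big_pred1_eq expr0 mul1r.
rewrite (partition_big (fun x => iter k T x) (fun y => T y == z)) //=.
have e : forall y, T y == z ->
   \sum_(i | (T (iter k T i) == z) && (iter k T i == y)) pi i = \sum_(i | iter k T i == y) pi i.
  move=> y /eqP Ty; apply: eq_bigl => i; case: (eqVneq (iter k T i) y) => [->|]; by rewrite ?Ty ?eqxx ?andbF.
rewrite (eq_bigr _ e).
have ny : forall y, T y == z -> y != xs.
  by move=> y /eqP Ty; apply: contra_neq nz => yx; rewrite -Ty yx HTxs.
apply: (@le_trans _ _ (\sum_(y | T y == z) (t ^+ 2) ^+ k * (pi z / B))).
  apply: ler_sum => y Ty; apply: le_trans (IH _ (ny _ Ty)) _.
  apply: ler_wpM2l; first by apply: exprn_ge0; apply: sqr_ge0.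
  rewrite ler_pdivlMr // mulrC; have := HBpi _ (ny _ Ty); by rewrite (eqP Ty).
have -> : \sum_(y | T y == z) (t ^+ 2) ^+ k * (pi z / B)
   = (#|[pred y | T y == z]|%:R : R) * ((t ^+ 2) ^+ k * (pi z / B)).
  by rewrite (eq_bigl (fun y => y \in [pred y | T y == z])) // sumr_const mulr_natl.
move: Ht2; set s := t ^+ 2 => hs; rewrite exprS hs.
have h0 : 0 <= (A / B) ^+ k * (pi z / B).
  apply: mulr_ge0; first by apply: exprn_ge0; rewrite -hs; apply: sqr_ge0.
  by apply: divr_ge0; apply: ltW.
apply: le_trans (ler_wpM2r h0 (Hcnt _ nz)) _.
by rewrite le_eqVlt; apply/orP; left; apply/eqP; ring.
Qed.

Lemma poinc (f : 'I_n -> R) :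
  \sum_x pi x * (f x - f xs) ^+ 2 <= ((1 - t)^-1) ^+ 2 * \sum_x pi x * (f x - f (T x)) ^+ 2.
Proof.
set d := fun z => f z - f (T z).
set K := (1 - t)^-1.
have t0 : 0 < t by case/andP: Ht.
have tK : 0 <= t < 1 by case/andP: Ht => /ltW -> ->.
have K0 : 0 <= K by rewrite /K invr_ge0 subr_ge0; case/andP: Ht => _ /ltW.
have step1 : forall x, (f x - f xs) ^+ 2 <= K * \sum_(k < n) (d (iter k T x) ^+ 2 / t ^+ k).
  move=> x; rewrite (@telesc R n pi xs T HTxs Hinc f x).
  have hw : forall k : 'I_n, 0 < t ^+ k by move=> k; apply: exprn_gt0.
  have := @cauchy_w R n (fun k : 'I_n => t ^+ k) (fun k : 'I_n => f (iter k T x) - f (iter k.+1 T x)) hw.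
  move=> /le_trans; apply.
  apply: ler_wpM2r; last exact: geo_le.
  apply: sumr_ge0 => k _; apply: divr_ge0; [exact: sqr_ge0| apply: exprn_ge0; exact: ltW].
apply: (@le_trans _ _ (\sum_x pi x * (K * \sum_(k < n) (d (iter k T x) ^+ 2 / t ^+ k)))).
  by apply: ler_sum => x _; apply: ler_wpM2l; [apply: ltW|apply: step1].
have e1 : \sum_x pi x * (K * \sum_(k < n) (d (iter k T x) ^+ 2 / t ^+ k))
   = K * \sum_(k < n) \sum_x pi x * (d (iter k T x) ^+ 2 / t ^+ k).
  rewrite [in RHS]exchange_big /= [RHS]mulr_sumr; apply: eq_bigr => x _.
  by rewrite mulrCA mulr_sumr.
rewrite e1 expr2 -mulrA; apply: ler_wpM2l => //.
apply: (@le_trans _ _ (\sum_(k < n) \sum_z pi z * d z ^+ 2 * t ^+ k)).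
  apply: ler_sum => k _.
  rewrite (sum_part (iter k T) (fun z => d z ^+ 2 / t ^+ k)).
  apply: ler_sum => z _.
  case: (eqVneq z xs) => [->|nz].
    by rewrite /d HTxs subrr expr0n /= !(mul0r, mulr0).
  apply: le_trans (ler_wpM2l _ (pre k _ nz)) _.
    by apply: divr_ge0; [exact: sqr_ge0| apply: exprn_ge0; exact: ltW].
  rewrite le_eqVlt; apply/orP; left; apply/eqP.
  have tk : t ^+ k != 0 by rewrite expf_neq0 // gt_eqF.
  by rewrite -exprM mulnC exprM expr2; field.
rewrite exchange_big /= mulr_sumr; apply: ler_sum => z _.
rewrite -mulr_sumr mulrC; apply: ler_wpM2r; last exact: geo_le.
by apply: mulr_ge0; [apply: ltW | apply: sqr_ge0].
Qed.

End Poinc.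
Set Implicit Arguments. Unset Strict Implicit.
Lemma term_le_sum (R : realType) (I : finType) (F : I -> R) j :
  (forall i, 0 <= F i) -> F j <= \sum_i F i.
Proof. by move=> h; rewrite (bigD1 j) //= lerDl sumr_ge0. Qed.

Section Gen.
Variables (R : realType) (n : nat) (pi : 'I_n -> R) (G : 'M[R]_n).
Hypothesis Hpi : forall x, 0 < pi x.
Hypothesis Hrow : forall x, \sum_y G x y = 0.
Hypothesis Hrev : forall x y, pi x * G x y = pi y * G y x.
Hypothesis Hoff : forall x y, x != y -> 0 <= G x y.

Definition Dir (f : 'I_n -> R) := \sum_x \sum_y pi x * G x y * (f x - f y) ^+ 2.

Lemma Dir_term (f : 'I_n -> R) x y : 0 <= pi x * G x y * (f x - f y) ^+ 2.
Proof.
case: (eqVneq x y) => [->|nxy]; first by rewrite subrr expr0n /= mulr0.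
by apply: mulr_ge0; [apply: mulr_ge0; [apply: ltW|apply: Hoff]|apply: sqr_ge0].
Qed.

Lemma Dir_ge0 f : 0 <= Dir f.
Proof. by apply: sumr_ge0 => x _; apply: sumr_ge0 => y _; apply: Dir_term. Qed.

Lemma Dir_path (f : 'I_n -> R) (g : 'I_n -> 'I_n) :
  \sum_x pi x * G x (g x) * (f x - f (g x)) ^+ 2 <= Dir f.
Proof.
apply: ler_sum => x _; apply: (@term_le_sum R _ (fun y => pi x * G x y * (f x - f y) ^+ 2) (g x)).
by move=> y; apply: Dir_term.
Qed.

Lemma self_adj (f g : 'I_n -> R) :
  \sum_x pi x * f x * (\sum_y G x y * g y) = \sum_x pi x * g x * (\sum_y G x y * f y).
Proof.
have e : forall (f g : 'I_n -> R), \sum_x pi x * f x * (\sum_y G x y * g y)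
   = \sum_x \sum_y (pi x * G x y) * f x * g y.
  move=> f' g'; apply: eq_bigr => x _; rewrite mulr_sumr; apply: eq_bigr => y _; ring.
rewrite !e exchange_big /=; apply: eq_bigr => x _; apply: eq_bigr => y _.
rewrite Hrev; ring.
Qed.

Lemma quad (f : 'I_n -> R) :
  \sum_x pi x * f x * (\sum_y G x y * f y) = - (Dir f / 2).
Proof.
have e1 : Dir f = \sum_x \sum_y pi x * G x y * f x ^+ 2
   - 2 * \sum_x \sum_y (pi x * G x y) * f x * f y
   + \sum_x \sum_y pi x * G x y * f y ^+ 2.
  rewrite mulr_sumr -sumrB -big_split /=; apply: eq_bigr => x _.
  rewrite mulr_sumr -sumrB -big_split /=; apply: eq_bigr => y _; ring.
have e2 : \sum_x \sum_y pi x * G x y * f x ^+ 2 = 0.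
  rewrite big1 // => x _; rewrite -big_distrl /= -mulr_sumr Hrow; ring.
have e3 : \sum_x \sum_y pi x * G x y * f y ^+ 2 = 0.
  rewrite exchange_big /= big1 // => y _.
  under eq_bigr => x _ do rewrite Hrev.
  by rewrite -big_distrl /= -mulr_sumr Hrow !mulr0 mul0r.
have e4 : \sum_x pi x * f x * (\sum_y G x y * f y) = \sum_x \sum_y (pi x * G x y) * f x * f y.
  apply: eq_bigr => x _; rewrite mulr_sumr; apply: eq_bigr => y _; ring.
by rewrite e4 e1 e2 e3; field.
Qed.

Lemma rev_act (u : 'I_n -> R) x :
  \sum_y G x y * (u y / pi y) = (\sum_y u y * G y x) / pi x.
Proof.
have px : pi x != 0 by rewrite gt_eqF.
apply: (mulfI px); rewrite [RHS]mulrC divfK // mulr_sumr; apply: eq_bigr => y _.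
have py : pi y != 0 by rewrite gt_eqF.
by rewrite (mulrA (pi x)) Hrev; field.
Qed.

Lemma eig_right (v : 'rV[R]_n) a x : v *m G = a *: v ->
  \sum_y G x y * (v 0 y / pi y) = a * (v 0 x / pi x).
Proof.
move=> hv; rewrite rev_act [RHS]mulrA; congr (_ * _).
have := congr1 (fun M : 'rV_n => M 0 x) hv; rewrite /= !mxE => <-.
by [].
Qed.

Lemma eig_sum (v : 'rV[R]_n) a : v *m G = a *: v -> a * \sum_x v 0 x = 0.
Proof.
move=> hv.
have e : forall x, a * v 0 x = \sum_y v 0 y * G y x.
  move=> x; have := congr1 (fun M : 'rV_n => M 0 x) hv; rewrite /= !mxE => <-.
  by [].
rewrite mulr_sumr (eq_bigr _ (fun x _ => e x)) exchange_big /= big1 // => y _.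
by rewrite -mulr_sumr Hrow mulr0.
Qed.

End Gen.
Section Main.
Variables (R : realType) (n : nat) (pi : 'I_n -> R) (G : 'M[R]_n) (xs : 'I_n) (T : 'I_n -> 'I_n).
Variables (t A B m : R).
Hypothesis Hpi : forall x, 0 < pi x.
Hypothesis Hrow : forall x, \sum_y G x y = 0.
Hypothesis Hrev : forall x y, pi x * G x y = pi y * G y x.
Hypothesis Hoff : forall x y, x != y -> 0 <= G x y.
Hypothesis HTxs : T xs = xs.
Hypothesis Hinc : forall x, x != xs -> pi x < pi (T x).
Hypothesis Hcnt : forall z, z != xs -> (#|[pred y | T y == z]|%:R : R) <= A.
Hypothesis HB : 0 < B.
Hypothesis HBpi : forall y, y != xs -> B * pi y <= pi (T y).
Hypothesis Ht : 0 < t < 1.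
Hypothesis Ht2 : t ^+ 2 = A / B.
Hypothesis Hm : forall x, x != xs -> m <= G x (T x).
Hypothesis Hm0 : 0 <= m.

Lemma Dir_m (f : 'I_n -> R) : m * \sum_x pi x * (f x - f (T x)) ^+ 2 <= Dir pi G f.
Proof.
apply: le_trans (Dir_path Hpi Hoff f T); rewrite mulr_sumr; apply: ler_sum => x _.
case: (eqVneq x xs) => [->|nx]; first by rewrite HTxs subrr expr0n /= !mulr0.
rewrite mulrCA -mulrA; apply: ler_wpM2l; first exact: ltW.
by apply: ler_wpM2r; [apply: sqr_ge0 | apply: Hm].
Qed.

Lemma var_le (f : 'I_n -> R) c : \sum_x pi x * f x = 0 ->
  \sum_x pi x * f x ^+ 2 <= \sum_x pi x * (f x - c) ^+ 2.
Proof.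
move=> h0.
have e : \sum_x pi x * (f x - c) ^+ 2
   = \sum_x pi x * f x ^+ 2 - 2 * c * \sum_x pi x * f x + c ^+ 2 * \sum_x pi x.
  rewrite !mulr_sumr -sumrB -big_split /=; apply: eq_bigr => x _; ring.
rewrite e h0 mulr0 subr0 lerDl; apply: mulr_ge0; first exact: sqr_ge0.
by apply: sumr_ge0 => x _; apply: ltW.
Qed.

Let K := (1 - t)^-1.

Lemma eig_common (v : 'rV[R]_n) a :
  v *m G = a *: v ->
  let f := fun x => v 0 x / pi x in
  a * \sum_x pi x * f x ^+ 2 = - (Dir pi G f / 2).
Proof.
move=> hv f; rewrite -(quad Hrow Hrev f) mulr_sumr; apply: eq_bigr => x _.
rewrite (eig_right Hpi Hrev x hv); rewrite /f; ring.
Qed.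

Lemma Kt : K * (1 - t) = 1.
Proof. by rewrite /K mulVf // subr_eq0; case/andP: Ht => _ /lt_eqF; rewrite eq_sym => ->. Qed.

Lemma eig_neg (v : 'rV[R]_n) a : v != 0 -> v *m G = a *: v -> a != 0 ->
  m * (1 - t) ^+ 2 <= - (2 * a).
Proof.
move=> vn0 hv an0.
set f := fun x => v 0 x / pi x.
have hq := eig_common hv; rewrite -/f /= in hq.
have hsum : \sum_x pi x * f x = 0.
  have e : \sum_x pi x * f x = \sum_x v 0 x.
    by apply: eq_bigr => x _; rewrite /f mulrC divfK // gt_eqF.
  rewrite e; have := eig_sum Hrow hv; move/eqP; rewrite mulf_eq0 (negbTE an0) /=; by move/eqP.
set Q := \sum_x pi x * f x ^+ 2.
have Qge : 0 <= Q by apply: sumr_ge0 => x _; apply: mulr_ge0; [apply: ltW|apply: sqr_ge0].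
have Qgt : 0 < Q.
  rewrite lt_def Qge andbT; apply/negP => /eqP Q0; move/eqP: vn0; apply.
  have h : forall x, pi x * f x ^+ 2 = 0.
    move=> x; apply: (psumr_eq0P _ Q0) => // y _.
    by apply: mulr_ge0; [apply: ltW|apply: sqr_ge0].
  apply/rowP => x; rewrite !mxE.
  move: (h x) => /eqP; rewrite mulf_eq0 gt_eqF //= sqrf_eq0 /f mulf_eq0 invr_eq0 (gt_eqF (Hpi x)) orbF.
  by move/eqP.
set S := \sum_x pi x * (f x - f (T x)) ^+ 2.
have h1 : Q <= K ^+ 2 * S.
  apply: le_trans (var_le (f xs) hsum) _.
  exact: (@poinc _ _ _ _ _ _ _ _ Hpi HTxs Hinc Hcnt HB HBpi Ht Ht2 f).
have h2 : m * S <= - (2 * a) * Q.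
  apply: le_trans (Dir_m f) _; rewrite mulNr -mulrA hq; lra.
have h3 : m * (1 - t) ^+ 2 * Q <= - (2 * a) * Q.
  apply: le_trans h2; rewrite -mulrA; apply: ler_wpM2l => //.
  have -> : S = (1 - t) ^+ 2 * (K ^+ 2 * S) by rewrite mulrA -exprMn [(1 - t) * K]mulrC Kt expr1n mul1r.
  by apply: ler_wpM2l => //; apply: sqr_ge0.
by rewrite -(ler_pM2r Qgt).
Qed.

Lemma eig_zero (v : 'rV[R]_n) : 0 < m -> v *m G = 0 -> exists c, forall x, v 0 x = c * pi x.
Proof.
move=> mgt hv.
have hv' : v *m G = 0 *: v by rewrite scale0r.
set f := fun x => v 0 x / pi x.
have hq := eig_common hv'; rewrite -/f /= mul0r in hq.
have D0 : Dir pi G f = 0.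
  by move/eqP: hq; rewrite eq_sym oppr_eq0 mulf_eq0 invr_eq0 pnatr_eq0 orbF => /eqP.
set S := \sum_x pi x * (f x - f (T x)) ^+ 2.
have S0 : S <= 0.
  have := Dir_m f; rewrite D0 -/S => h.
  by rewrite -(ler_pM2l mgt) mulr0.
have hP := @poinc _ _ _ _ _ _ _ _ Hpi HTxs Hinc Hcnt HB HBpi Ht Ht2 f; rewrite -/S in hP.
have hP0 : \sum_x pi x * (f x - f xs) ^+ 2 <= 0.
  apply: le_trans hP _; rewrite mulr_ge0_le0 //; apply: sqr_ge0.
exists (f xs) => x.
have : pi x * (f x - f xs) ^+ 2 <= 0.
  apply: le_trans hP0; apply: (@term_le_sum R _ (fun x => pi x * (f x - f xs) ^+ 2)).
  by move=> y; apply: mulr_ge0; [apply: ltW|apply: sqr_ge0].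
rewrite pmulr_rle0 // => h; have : (f x - f xs) ^+ 2 == 0.
  by rewrite eq_le h sqr_ge0.
rewrite sqrf_eq0 subr_eq0 => /eqP <-.
by rewrite /f divfK // gt_eqF.
Qed.

End Main.
From mathcomp Require Import complex.

Lemma Re_sum (R : realType) (I : finType) (F : I -> R[i]) :
  complex.Re (\sum_i F i) = \sum_i complex.Re (F i).
Proof. by apply: (big_morph (@complex.Re R)) => // -[a b] [c d]. Qed.

Lemma Im_sum (R : realType) (I : finType) (F : I -> R[i]) :
  complex.Im (\sum_i F i) = \sum_i complex.Im (F i).
Proof. by apply: (big_morph (@complex.Im R)) => // -[a b] [c d]. Qed.

Lemma ReMC (R : realType) (u : R[i]) (k : R) :
  complex.Re (u * k%:C%C) = complex.Re u * k.
Proof. by case: u => ur ui /=; rewrite mulr0 subr0. Qed.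

Lemma ImMC (R : realType) (u : R[i]) (k : R) :
  complex.Im (u * k%:C%C) = complex.Im u * k.
Proof. by case: u => ur ui /=; rewrite mulr0 add0r. Qed.

Lemma ReM (R : realType) (z u : R[i]) :
  complex.Re (z * u) = complex.Re z * complex.Re u - complex.Im z * complex.Im u.
Proof. by case: z => zr zi; case: u => ur ui. Qed.

Lemma ImM (R : realType) (z u : R[i]) :
  complex.Im (z * u) = complex.Re z * complex.Im u + complex.Im z * complex.Re u.
Proof. by case: z => zr zi; case: u => ur ui. Qed.
Section Cplx.
Variables (R : realType) (n : nat) (pi : 'I_n -> R) (G : 'M[R]_n).
Hypothesis Hpi : forall x, 0 < pi x.
Hypothesis Hrow : forall x, \sum_y G x y = 0.
Hypothesis Hrev : forall x y, pi x * G x y = pi y * G y x.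
Hypothesis Hoff : forall x y, x != y -> 0 <= G x y.
Hypothesis Hpos : exists x y, x != y /\ 0 < G x y.

Lemma tr_neg : \tr G < 0.
Proof.
have hd : forall x, G x x = - \sum_(y | y != x) G x y.
  move=> x; have := Hrow x; rewrite (bigD1 x) //= => /eqP; rewrite addr_eq0 => /eqP.
  done.
rewrite /mxtrace (eq_bigr _ (fun x _ => hd x)) sumrN oppr_lt0.
case: Hpos => x0 [y0 [nxy gp]].
have h0 : forall x, 0 <= \sum_(y | y != x) G x y.
  by move=> x; apply: sumr_ge0 => y; rewrite eq_sym; apply: Hoff.
apply: lt_le_trans (@term_le_sum R _ (fun x => \sum_(y | y != x) G x y) x0 h0).
rewrite (bigD1 y0) /=; last by rewrite eq_sym.
apply: lt_le_trans gp _; rewrite lerDl; apply: sumr_ge0 => y /andP[yx _].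
by apply: Hoff; rewrite eq_sym.
Qed.

Lemma n_gt0 : (0 < n)%N.
Proof. by case: Hpos => x _; apply: leq_ltn_trans (leq0n _) (ltn_ord x). Qed.

Lemma cp_neq : char_poly G != 'X^n.
Proof.
apply/eqP => e; have := char_poly_trace G n_gt0; rewrite e coefXn ltn_eqF ?ltn_predL ?n_gt0 //=.
move/eqP; rewrite eq_sym oppr_eq0 => /eqP t0.
by have := tr_neg; rewrite t0 ltxx.
Qed.

Lemma prodX0 (r : seq R[i]) : all (fun z => z == 0) r ->
  \prod_(z <- r) ('X - z%:P) = 'X^(size r).
Proof.
elim: r => [|z r IH] /=; first by rewrite big_nil expr0.
by case/andP => /eqP -> h; rewrite big_cons IH // subr0 exprS.
Qed.

Lemma nonzero_eig : exists r : R, eigenvalue G r /\ r != 0.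
Proof.
pose f := real_complex R.
set pC := char_poly (map_mx f G).
have hpC : pC = map_poly f (char_poly G) by rewrite map_char_poly.
have [r hr] := closed_field_poly_normal pC.
have lc : lead_coef pC = 1 by apply/monicP; apply: char_poly_monic.
rewrite lc scale1r in hr.
have [z zr zn0] : exists2 z, z \in r & z != 0.
  case: (boolP (all (fun z => z == 0) r)) => [ha|/allPn //].
  exfalso; move: hr; rewrite prodX0 // => hr.
  have hs : size r = n.
    have := size_char_poly (map_mx f G); rewrite -/pC hr size_polyXn.
    by case.
  rewrite hs -(map_polyXn f) hpC in hr.
  by move/eqP: cp_neq; apply; apply: (map_poly_inj f).
have rz : root pC z by rewrite hr root_prod_XsubC.
have ez : eigenvalue (map_mx f G) z by rewrite eigenvalue_root_char.
case/eigenvalueP: ez => v hv vn0.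
set a := fun x => complex.Re (v 0 x).
set b := fun x => complex.Im (v 0 x).
have hcomp : forall x,
  \sum_y a y * G y x = complex.Re z * a x - complex.Im z * b x /\
  \sum_y b y * G y x = complex.Re z * b x + complex.Im z * a x.
  move=> x; have := congr1 (fun M : 'rV[R[i]]_n => M 0 x) hv; rewrite /= !mxE => e.
  split.
    have := congr1 (@complex.Re R) e; rewrite Re_sum ReM => <-.
    by apply: eq_bigr => y _; rewrite mxE ReMC.
  have := congr1 (@complex.Im R) e; rewrite Im_sum ImM => <-.
  by apply: eq_bigr => y _; rewrite mxE ImMC.
set F := fun x => a x / pi x.
set H := fun x => b x / pi x.
have hF : forall x, \sum_y G x y * F y = complex.Re z * F x - complex.Im z * H x.
  move=> x; rewrite (rev_act Hpi Hrev a x) (hcomp x).1 /F /H.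
  by have := Hpi x; rewrite lt0r => /andP[px _]; field.
have hH : forall x, \sum_y G x y * H y = complex.Re z * H x + complex.Im z * F x.
  move=> x; rewrite (rev_act Hpi Hrev b x) (hcomp x).2 /F /H.
  by have := Hpi x; rewrite lt0r => /andP[px _]; field.
have sa := self_adj Hrev F H.
have key : complex.Im z * \sum_x pi x * (F x ^+ 2 + H x ^+ 2) = 0.
  have e : complex.Im z * \sum_x pi x * (F x ^+ 2 + H x ^+ 2) =
     \sum_x (pi x * F x * (\sum_y G x y * H y) - pi x * H x * (\sum_y G x y * F y)).
    by rewrite mulr_sumr; apply: eq_bigr => x _; rewrite hF hH; ring.
  by rewrite e sumrB sa subrr.
have pos : 0 < \sum_x pi x * (F x ^+ 2 + H x ^+ 2).
  have : ~~ [forall x, v 0 x == 0].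
    apply: contra vn0 => /forallP h; apply/eqP/rowP => x; rewrite mxE; exact/eqP/h.
  case/forallPn => x hx.
  have hterm : forall y, 0 <= pi y * (F y ^+ 2 + H y ^+ 2).
    by move=> y; apply: mulr_ge0; [apply: ltW|apply: addr_ge0; apply: sqr_ge0].
  apply: lt_le_trans (@term_le_sum R _ _ x hterm).
  apply: mulr_gt0 => //.
  have : (a x != 0) || (b x != 0).
    move: hx; rewrite /a /b; case: (v 0 x) => ar ai /=.
    apply: contraR; rewrite negb_or !negbK => /andP[/eqP -> /eqP ->] //.
  have px : pi x != 0 by rewrite gt_eqF.
  case/orP => [ha|hb].
    apply: lt_le_trans (_ : 0 < F x ^+ 2) _.
      by rewrite exprn_even_gt0 //= /F mulf_neq0 // invr_eq0.
    by rewrite lerDl sqr_ge0.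
  apply: lt_le_trans (_ : 0 < H x ^+ 2) _.
    by rewrite exprn_even_gt0 //= /H mulf_neq0 // invr_eq0.
  by rewrite lerDr sqr_ge0.
have Im0 : complex.Im z = 0.
  by move/eqP: key; rewrite mulf_eq0 (gt_eqF pos) orbF => /eqP.
have zE : f (complex.Re z) = z.
  by move: Im0; case: z {zr zn0 rz hv hcomp hF hH key} => zr zi /= ->.
exists (complex.Re z); split.
  rewrite eigenvalue_root_char -(fmorph_root f) -hpC.
  exact: (@eq_rect _ z (fun w => root pC w) rz _ (esym zE)).
apply: contra zn0 => /eqP zr0.
by rewrite -zE zr0 /f; exact: eqxx.
Qed.

End Cplx.
Section Glue.
Variables (R : realType) (n : nat).
Local Open Scope classical_set_scope.

Lemma gap_generic (A : 'M[R]_n) top c :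
  (\rank (eigenspace A top) <= 1)%N ->
  (forall a, eigenvalue A a -> a < top -> a <= top - c) ->
  ((exists a, eigenvalue A a /\ a < top) \/ c <= top) ->
  c <= top - lambda2 top A.
Proof.
move=> hr hb hne; rewrite /lambda2 ifN; last by rewrite -ltnNge ltnS.
set E := [set a | eigenvalue A a /\ a < top].
have hsup : E !=set0 -> c <= top - sup E.
  move=> ne; have : sup E <= top - c.
    by apply: ge_sup => // a [ea lta]; exact: hb.
  lra.
case: (pselect (E !=set0)) => [ne|e0]; first exact: hsup.
case: hne => [[a0 [ea0 lt0]]|ctop].
  by exfalso; apply: e0; exists a0.
have -> : E = set0.
  by apply/seteqP; split => x // Ex; exfalso; apply: e0; exists x.
by rewrite sup0 subr0.
Qed.

Lemma lambda2_le (A : 'M[R]_n) top : 0 <= top -> lambda2 top A <= top.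
Proof.
move=> t0; rewrite /lambda2; case: ifP => _ //.
set E := [set a | eigenvalue A a /\ a < top].
case: (pselect (E !=set0)) => [ne|e0].
  by apply: ge_sup => // a [_ /ltW].
have -> : E = set0.
  by apply/seteqP; split => x // Ex; exfalso; apply: e0; exists x.
by rewrite sup0.
Qed.

Lemma rank_le1 (A : 'M[R]_n) top (w : 'rV[R]_n) :
  (forall v : 'rV_n, v *m A = top *: v -> exists c, v = c *: w) ->
  (\rank (eigenspace A top) <= 1)%N.
Proof.
move=> H; apply: leq_trans (mxrankS _) (rank_leq_row w).
apply/row_subP => i; have := row_sub i (eigenspace A top) => /eigenspaceP h.
have [c ->] := H _ h; exact: scalemx_sub (submx_refl w).
Qed.

Section GenOf.
Variables (pi : 'I_n -> R) (A : 'M[R]_n) (top : R).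
Let G := A - top%:M.

Lemma G_off x y : x != y -> G x y = A x y.
Proof. by move=> nxy; rewrite !mxE (negbTE nxy) mulr0n subr0. Qed.

Lemma G_row : (forall x, \sum_y A x y = top) -> forall x, \sum_y G x y = 0.
Proof.
move=> h x; rewrite (eq_bigr (fun y => A x y - top *+ (x == y))); last by move=> y _; rewrite !mxE.
rewrite sumrB h (bigD1 x) //= eqxx mulr1n big1 ?addr0 ?subrr // => y yx.
by rewrite eq_sym (negbTE yx) mulr0n.
Qed.

Lemma G_rev : (forall x y, pi x * A x y = pi y * A y x) -> forall x y, pi x * G x y = pi y * G y x.
Proof.
move=> h x y; case: (eqVneq x y) => [->//|nxy].
by rewrite !G_off // eq_sym.
Qed.

Lemma G_eig (v : 'rV[R]_n) a : v *m A = a *: v -> v *m G = (a - top) *: v.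
Proof. by move=> hv; rewrite mulmxBr mul_mx_scalar hv scalerBl. Qed.

End GenOf.
End Glue.

Section Final.
Variables (R : realType) (n : nat) (pi : 'I_n -> R) (xs : 'I_n) (T : 'I_n -> 'I_n).
Variables (t A B m : R) (M : 'M[R]_n) (top : R).
Hypothesis Hpi : forall x, 0 < pi x.
Hypothesis HTxs : T xs = xs.
Hypothesis Hinc : forall x, x != xs -> pi x < pi (T x).
Hypothesis Hcnt : forall z, z != xs -> (#|[pred y | T y == z]|%:R : R) <= A.
Hypothesis HB : 0 < B.
Hypothesis HBpi : forall y, y != xs -> B * pi y <= pi (T y).
Hypothesis Ht : 0 < t < 1.
Hypothesis Ht2 : t ^+ 2 = A / B.
Hypothesis HTn : forall x, x != xs -> T x != x.
Hypothesis Mrow : forall x, \sum_y M x y = top.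
Hypothesis Mrev : forall x y, pi x * M x y = pi y * M y x.
Hypothesis Moff : forall x y, x != y -> 0 <= M x y.
Hypothesis Hm : forall x, x != xs -> m <= M x (T x).
Hypothesis Hm0 : 0 <= m.

Let G := M - top%:M.
Let Grow := G_row Mrow.
Let Grev := @G_rev R n pi M top Mrev.
Lemma Goff x y : x != y -> 0 <= G x y.
Proof. by move=> nxy; rewrite /G G_off //; apply: Moff. Qed.
Lemma Gm x : x != xs -> m <= G x (T x).
Proof. by move=> nx; rewrite /G G_off ?Hm // eq_sym HTn. Qed.

Lemma fin_rank : 0 < m -> (\rank (eigenspace M top) <= 1)%N.
Proof.
move=> mgt; apply: (rank_le1 (w := \row_x pi x)) => v hv.
have hv0 : v *m G = 0 by rewrite /G (G_eig top hv) subrr scale0r.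
have [c hc] := eig_zero Hpi Grow Grev Goff HTxs Hinc Hcnt HB HBpi Ht Ht2 Gm mgt hv0.
by exists c; apply/rowP => x; rewrite !mxE hc.
Qed.

Lemma fin_bound a : eigenvalue M a -> a != top -> a <= top - m * (1 - t) ^+ 2 / 2.
Proof.
move=> /eigenvalueP [v hv vn0] hat.
have := eig_neg Hpi Grow Grev Goff HTxs Hinc Hcnt HB HBpi Ht Ht2 Gm Hm0 vn0 (G_eig top hv).
rewrite subr_eq0 => /(_ hat) h; lra.
Qed.

End Final.
Theorem lemma3 (R : realType) (n : nat) (pi : 'I_n -> R) (p alpha nu : R)
  (N : 'I_n -> {set 'I_n}) (xs : 'I_n) (T : 'I_n -> 'I_n) :
  is_prob pi ->
  1 < p -> 0 < alpha ->
  (forall x y, (y \in N x) = (x \in N y)) ->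
  (forall x, x \notin N x) ->
  (forall x, (#|N x|%:R : R) <= p `^ alpha) ->
  alpha < nu ->
  T xs = xs ->
  (forall x, x != xs -> T x \in N x /\ p `^ nu * pi x <= pi (T x)) ->
  (forall (P : 'M[R]_n) (m : R),
     transition_matrix P -> irreducible P -> reversible pi P ->
     is_min_off xs (fun x => P x (T x)) m ->
     kappa p alpha nu * m <= GapP P) /\
  (forall (Q : 'M[R]_n) (m : R),
     rate_matrix Q -> irreducible Q -> reversible pi Q ->
     is_min_off xs (fun x => Q x (T x)) m ->
     kappa p alpha nu * m <= GapQ Q).
Proof.
move=> [Hpi Hsum] p1 a0 Nsym Nirr Ncard anu HTxs HT.
set t := p `^ (- ((nu - alpha) / 2)).
have p0 : 0 < p by apply: lt_trans p1.
have pn0 : p != 0 by rewrite gt_eqF.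
have Bgt1 : 1 < p `^ nu.
  rewrite lt_neqAle; apply/andP; split.
    rewrite eq_sym powR_eq1 (gt_eqF p1) (lt_gtF p0) /= gt_eqF //; lra.
  rewrite -{1}(powRr0 p); apply: ler_powR; [exact: ltW | lra].
have HB : 0 < p `^ nu by apply: lt_trans Bgt1.
have HBpi : forall y, y != xs -> p `^ nu * pi y <= pi (T y) by move=> y ny; exact: (HT y ny).2.
have Hinc : forall x, x != xs -> pi x < pi (T x).
  move=> x nx; apply: lt_le_trans (HBpi x nx); rewrite ltr_pMl //.
have Hcnt : forall z, z != xs -> (#|[pred y | T y == z]|%:R : R) <= p `^ alpha.
  move=> z nz; apply: le_trans (Ncard z); rewrite ler_nat; apply: subset_leq_card.
  apply/fintype.subsetP => y; rewrite inE => /eqP Ty.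
  have ny : y != xs by apply: contra_neq nz => yx; rewrite -Ty yx HTxs.
  by have := (HT y ny).1; rewrite Ty Nsym.
have HTn : forall x, x != xs -> T x != x.
  by move=> x nx; apply: contraTneq (HT x nx).1 => ->; exact: Nirr.
have t0 : 0 < t by apply: powR_gt0.
have t1 : t < 1.
  have en : - ((nu - alpha) / 2) < 0 by lra.
  rewrite lt_neqAle; apply/andP; split.
    by rewrite /t powR_eq1 (gt_eqF p1) (lt_gtF p0) /= lt_eqF.
  rewrite /t; apply: (@le_trans _ _ (p `^ 0)); last by rewrite powRr0.
  apply: ler_powR; [exact: ltW | lra].
have Ht2 : t ^+ 2 = p `^ alpha / p `^ nu.
  rewrite expr2 /t -powRD; last by rewrite pn0 implybT.
  rewrite -powRB; last by rewrite pn0 implybT.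
  congr (_ `^ _); lra.
have Htt : 0 < t < 1 by rewrite t0 t1.
have kap : forall m, 0 <= m -> kappa p alpha nu * m <= m * (1 - t) ^+ 2 / 2.
  move=> m m0; rewrite /kappa -/t.
  have u0 : 0 <= 1 - t by lra.
  have u3 : (1 - t) ^+ 3 <= (1 - t) ^+ 2.
    rewrite exprS; apply: ler_piMl; [exact: exprn_ge0 | lra].
  have := ler_wpM2r m0 u3; lra.
have sq1 : (1 - t) ^+ 2 <= 1.
  rewrite expr2; apply: mulr_ile1; lra.
split.
- move=> P m [Pnn Prow] _ Prev [[x0 nx0 mE] Hmin].
  have m0 : 0 <= m by rewrite mE Pnn.
  rewrite /GapP.
  case: (eqVneq m 0) => [->|mn0].
    by rewrite mulr0 subr_ge0; apply: lambda2_le; apply: ler01.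
  have mgt : 0 < m by rewrite lt_def mn0 m0.
  have Poff : forall x y, x != y -> 0 <= P x y by move=> x y _; apply: Pnn.
  apply: gap_generic.
  + exact: (fin_rank Hpi HTxs Hinc Hcnt HB HBpi Htt Ht2 HTn Prow Prev Poff Hmin mgt).
  + move=> a ea alt.
    have := fin_bound Hpi HTxs Hinc Hcnt HB HBpi Htt Ht2 HTn Prow Prev Poff Hmin m0 ea (negbT (lt_eqF alt)).
    have := kap m m0; lra.
  + right; apply: le_trans (kap m m0) _.
    have m1 : m <= 1.
      rewrite mE -(Prow x0); apply: (@term_le_sum R _ (fun y => P x0 y) (T x0)).
      by move=> y; apply: Pnn.
    have : m * (1 - t) ^+ 2 <= 1 * 1.
      by apply: ler_pM m0 _ m1 sq1; apply: exprn_ge0; lra.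
    lra.
- move=> Q m [Qoff Qrow] _ Qrev [[x0 nx0 mE] Hmin].
  have m0 : 0 <= m by rewrite mE Qoff // eq_sym HTn.
  rewrite /GapQ -sub0r.
  case: (eqVneq m 0) => [->|mn0].
    by rewrite mulr0 subr_ge0; apply: lambda2_le.
  have mgt : 0 < m by rewrite lt_def mn0 m0.
  apply: gap_generic.
  + exact: (fin_rank Hpi HTxs Hinc Hcnt HB HBpi Htt Ht2 HTn Qrow Qrev Qoff Hmin mgt).
  + move=> a ea alt.
    have := fin_bound Hpi HTxs Hinc Hcnt HB HBpi Htt Ht2 HTn Qrow Qrev Qoff Hmin m0 ea (negbT (lt_eqF alt)).
    have := kap m m0; lra.
  + left.
    have Hpos : exists x y, x != y /\ 0 < Q x y.
      by exists x0, (T x0); split; [rewrite eq_sym HTn | rewrite -mE].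
    have [r [er rn0]] := nonzero_eig Hpi Qrow Qrev Qoff Hpos.
    exists r; split => //.
    have := fin_bound Hpi HTxs Hinc Hcnt HB HBpi Htt Ht2 HTn Qrow Qrev Qoff Hmin m0 er rn0.
    have : 0 < m * (1 - t) ^+ 2 by apply: mulr_gt0 => //; apply: exprn_gt0; lra.
    lra.
Qed.
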